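(* Let $f:M\to M$ be a partially hyperbolic endomorphism of a closed manifold $M$, let $x\in M$, and let $E^c_f(x)$ and $F^c_f(x)$ be two center directions at $x$ (arising from possibly different orbits through $x$). Then $F^c_f(x)\subset E^c_f(x)\oplus E^s_f(x)$. In particular, the subspace $E^{cs}_f(x)=E^c_f(x)\oplus E^s_f(x)$ does not depend on the orbit through $x$.
   Context: A $C^1$ local diffeomorphism $f:M\to M$ is a partially hyperbolic endomorphism if there are a Riemannian metric and constants $0<\nu<\gamma_1\le\gamma_2<\mu$, $\nu<1<\mu$, $C>1$ such that for every orbit $(x_n)_{n\in\mathbb{Z}}$ ($f(x_n)=x_{n+1}$) there is a splitting $T_{x_n}M=E^s_f(x_n)\oplus E^c_f(x_n)\oplus E^u_f(x_n)$, $Df$-invariant along the orbit, with $\|Df^n_{x_i}v^s\|\le C\nu^n\|v^s\|$, $C^{-1}\gamma_1^n\|v^c\|\le\|Df^n_{x_i}v^c\|\le C\gamma_2^n\|v^c\|$, $C^{-1}\mu^n\|v^u\|\le\|Df^n_{x_i}v^u\|$ for all $n\ge0$, $i\in\mathbb{Z}$, $v^\ast\in E^\ast_f(x_i)$. A center direction at $x$ is $E^c_f(x_0)$ for some orbit with $x_0=x$. The stable subspace $E^s_f(x)$ is the same for all orbits through $x$. *)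

(* Defs.v *)
From HB Require Import structures.
From mathcomp Require Import all_boot all_order all_algebra.
From mathcomp Require Import reals.
Set Implicit Arguments. Unset Strict Implicit. Unset Printing Implicit Defensive.
Import Order.TTheory GRing.Theory Num.Theory.
Local Open Scope ring_scope.

(* Abstract model of the tangent bundle of a d-dimensional manifold M:
   every tangent space T_xM is identified (pointwise, no continuity needed)
   with the row vectors 'rV[R]_d; the derivative Df x : T_xM -> T_{f x}M
   is v |-> v *m Df x (row-vector convention); a Riemannian metric is a
   family of symmetric positive definite Gram matrices g x. Subspaces of
   T_xM are represented by matrices through their row space (%MS). *)

Section PH.
Variables (R : realType) (M : Type) (d : nat).

Definition rnorm (g : M -> 'M[R]_d) (x : M) (v : 'rV[R]_d) : R :=
  Num.sqrt ((v *m g x *m v^T) 0 0).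

Definition riemannian_metric (g : M -> 'M[R]_d) : Prop :=
  forall x, (g x)^T = g x /\
    (forall v : 'rV[R]_d, v != 0 -> 0 < (v *m g x *m v^T) 0 0).

(* n-th iterate of the derivative along the forward orbit of x:
   Df^n_x = Df_x then Df_{f x} ... then Df_{f^{n-1} x} *)
Fixpoint Dfn (f : M -> M) (Df : M -> 'M[R]_d) (x : M) (n : nat) : 'M[R]_d :=
  match n with
  | 0 => 1%:M
  | n'.+1 => Df x *m Dfn f Df (f x) n'
  end.

Definition is_orbit (f : M -> M) (o : int -> M) : Prop :=
  forall n : int, f (o n) = o (n + 1).

Definition ph_splitting (f : M -> M) (Df : M -> 'M[R]_d) (g : M -> 'M[R]_d)
    (nu g1 g2 mu C : R) (o : int -> M) (Es Ec Eu : int -> 'M[R]_d) : Prop :=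
  (forall i : int,
      (\rank (Es i + Ec i + Eu i)%MS = (\rank (Es i) + \rank (Ec i) + \rank (Eu i))%N) /\ (1%:M <= Es i + Ec i + Eu i)%MS) /\
  (forall i : int,
      (Es i *m Df (o i) == Es ((i + 1)%R))%MS /\
      (Ec i *m Df (o i) == Ec ((i + 1)%R))%MS /\
      (Eu i *m Df (o i) == Eu ((i + 1)%R))%MS) /\
  (forall (n : nat) (i : int) (v : 'rV[R]_d), (v <= Es i)%MS ->
      rnorm g (iter n f (o i)) (v *m Dfn f Df (o i) n)
        <= C * nu ^+ n * rnorm g (o i) v) /\
  (forall (n : nat) (i : int) (v : 'rV[R]_d), (v <= Ec i)%MS ->
      C^-1 * g1 ^+ n * rnorm g (o i) v
        <= rnorm g (iter n f (o i)) (v *m Dfn f Df (o i) n) /\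
      rnorm g (iter n f (o i)) (v *m Dfn f Df (o i) n)
        <= C * g2 ^+ n * rnorm g (o i) v) /\
  (forall (n : nat) (i : int) (v : 'rV[R]_d), (v <= Eu i)%MS ->
      C^-1 * mu ^+ n * rnorm g (o i) v
        <= rnorm g (iter n f (o i)) (v *m Dfn f Df (o i) n)).

Definition ph_endomorphism (f : M -> M) (Df : M -> 'M[R]_d) (g : M -> 'M[R]_d)
    (nu g1 g2 mu C : R) : Prop :=
  (forall x, Df x \in unitmx) /\            (* local diffeomorphism *)
  riemannian_metric g /\
  0 < nu /\ nu < g1 /\ g1 <= g2 /\ g2 < mu /\ nu < 1 /\ 1 < mu /\ 1 < C /\
  (forall o, is_orbit f o ->
     exists Es Ec Eu : int -> 'M[R]_d, ph_splitting f Df g nu g1 g2 mu C o Es Ec Eu).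

End PH.

(* Main.v *)
Require Import Defs.
From HB Require Import structures.
From mathcomp Require Import all_boot all_order all_algebra.
From mathcomp Require Import reals.
From mathcomp Require Import ring lra.
Import Order.TTheory GRing.Theory Num.Theory.
Local Open Scope ring_scope.

Section Q.
Variables (R : realType) (d : nat).
Definition qf (G : 'M[R]_d) (v : 'rV[R]_d) := (v *m G *m v^T) 0 0.

Lemma qf_para G a b : qf G (a+b) + qf G (a-b) = 2 * qf G a + 2 * qf G b.
Proof.
rewrite /qf linearD linearB /= !(mulmxDl, mulmxBl, mulmxDr, mulmxBr).
rewrite ?(mulmxN, mulNmx, opprK).
move: (a *m G *m a^T) (a *m G *m b^T) (b *m G *m a^T) (b *m G *m b^T) => A1 A2 A3 A4; rewrite !mxE; lra.
Qed.

Lemma qfN G a : qf G (- a) = qf G a.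
Proof. by rewrite /qf linearN /= mulNmx mulNmx mulmxN opprK. Qed.

Lemma bern (h : R) n : 0 <= h -> 1 + n%:R * h <= (1 + h) ^+ n.
Proof.
move=> h0; elim: n => [|n IH]; first by rewrite expr0 mul0r addr0.
rewrite exprS -natr1.
have: 0 <= n%:R * h :> R by apply: mulr_ge0.
have: 1 <= (1+h)^+n by rewrite exprn_ege1 // lerDl.
nra.
Qed.

Lemma geom (c B r : R) : 0 <= c -> 1 < r -> (forall n, c * r ^+ n <= B) -> c <= 0.
Proof.
move=> c0 r1 H; rewrite le_eqVlt in c0; case/orP: c0 => [/eqP<-//|cp].
exfalso.
have hp : 0 < r - 1 by lra.
have B0 : 0 <= B by have := H 0%N; rewrite expr0 mulr1; lra.
set z := B / (c * (r - 1)).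
have z0 : 0 <= z by rewrite /z divr_ge0 // mulr_ge0 // ltW.
have := archi_boundP z0; set N := Num.Def.archi_bound z => hN.
have := H N; have := @bern (r-1) N (ltW hp).
rewrite (addrC 1 (r-1)) subrK => hb hc.
have : c * (1 + N%:R * (r-1)) <= B by apply: le_trans hc; rewrite ler_pM2l.
have : z * (c * (r - 1)) = B by rewrite /z divfK // mulf_neq0 // gt_eqF // subr_gt0.
have: 0 < c * (r-1) by rewrite mulr_gt0.
nra.
Qed.

Lemma geom2 (c B a b : R) : 0 <= c -> 0 < a -> a < b ->
  (forall n, c * b ^+ n <= B * a ^+ n) -> c <= 0.
Proof.
move=> c0 a0 ab H; apply: (@geom c B (b / a)) => //.
  by rewrite ltr_pdivlMr // mul1r.
move=> n; rewrite expr_div_n mulrA ler_pdivrMr ?exprn_gt0 //.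
Qed.

Lemma sq_le (a c : R) : 0 <= a -> Num.sqrt a <= c -> a <= c ^+ 2.
Proof.
move=> a0 h; have s0 := sqrtr_ge0 a; have := sqr_sqrtr a0.
nra.
Qed.

Lemma sq_ge (a c : R) : 0 <= a -> 0 <= c -> c <= Num.sqrt a -> c ^+ 2 <= a.
Proof.
move=> a0 c0 h; have s0 := sqrtr_ge0 a; have := sqr_sqrtr a0.
nra.
Qed.

Lemma arith (C ci P Gg Nn K su ss sc Qv Qs Qc Qu : R) :
  1 < C -> ci * C = 1 -> 0 <= Nn -> Nn <= Gg -> 0 <= ss -> 0 <= sc ->
  Qu <= 2 * Qv + 4 * Qs + 4 * Qc ->
  (ci * P * su) ^+ 2 <= Qu -> Qv <= (K * Gg) ^+ 2 ->
  Qs <= (C * Nn * ss) ^+ 2 -> Qc <= (C * Gg * sc) ^+ 2 ->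
  P ^+ 2 * su ^+ 2 <=
    Gg ^+ 2 * (C ^+ 2 * (2 * K ^+ 2 + 4 * C ^+ 2 * ss ^+ 2 + 4 * C ^+ 2 * sc ^+ 2)).
Proof.
move=> C1 ciC N0 NG ss0 sc0 hu hl hv hs hc.
have h1 : C ^+ 2 * ci ^+ 2 = 1 by rewrite -exprMn mulrC ciC expr1n.
have e1 : P ^+ 2 * su ^+ 2 = C ^+ 2 * (ci * P * su) ^+ 2.
  by rewrite !exprMn; transitivity ((C ^+ 2 * ci ^+ 2) * (P ^+ 2 * su ^+ 2)); [rewrite h1 mul1r|ring].
have hN : Nn ^+ 2 <= Gg ^+ 2 by rewrite lerXn2r // nnegrE; apply: le_trans NG.
have hs' : Qs <= Gg ^+ 2 * (C ^+ 2 * ss ^+ 2).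
  apply: le_trans hs _; rewrite !exprMn.
  have : 0 <= C ^+ 2 * ss ^+ 2 by rewrite mulr_ge0 // sqr_ge0.
  nra.
have hc' : Qc <= Gg ^+ 2 * (C ^+ 2 * sc ^+ 2) by rewrite !exprMn in hc *; lra.
have hv' : Qv <= Gg ^+ 2 * K ^+ 2 by rewrite !exprMn in hv *; lra.
have C2 : 0 <= C ^+ 2 by rewrite sqr_ge0.
rewrite e1.
have : C ^+ 2 * (ci * P * su) ^+ 2 <= C ^+ 2 * Qu by rewrite ler_wpM2l.
have : C ^+ 2 * Qu <= C ^+ 2 * (Gg ^+ 2 * (2 * K ^+ 2 + 4 * (C ^+ 2 * ss ^+ 2) + 4 * (C ^+ 2 * sc ^+ 2))).
  rewrite ler_wpM2l //; lra.
move=> a b; apply: le_trans b _; apply: le_trans a _.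
by rewrite le_eqVlt; apply/orP; left; apply/eqP; ring.
Qed.
End Q.
Arguments qf {R d}.
Arguments qf_para {R d}.
Arguments qfN {R d}.
Lemma qf_ge0 (R : realType) (M : Type) (d : nat) (g : M -> 'M[R]_d) z w :
  riemannian_metric g -> 0 <= qf (g z) w.
Proof.
move=> Hg; have [->|nz] := eqVneq w 0.
  by rewrite /qf !mul0mx mxE.
by apply: ltW; apply: (Hg z).2.
Qed.

Arguments qf_ge0 {R M d g} z w _.

Lemma key (R : realType) (M : Type) (d : nat)
    (f : M -> M) (Df : M -> 'M[R]_d) (g : M -> 'M[R]_d)
    (nu g1 g2 mu C : R) x o Es Ec Eu (v : 'rV[R]_d) K :
  ph_endomorphism f Df g nu g1 g2 mu C -> o 0 = x ->
  ph_splitting f Df g nu g1 g2 mu C o Es Ec Eu -> 0 <= K ->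
  (forall n, rnorm g (iter n f x) (v *m Dfn f Df x n) <= K * g2 ^+ n) ->
  (v <= Es 0 + Ec 0)%MS.
Proof.
move=> [_ [Hg [nu0 [nug1 [g12 [g2mu [nu1 [mu1 [C1 _]]]]]]]]] ho [Hdec [_ [HS [HC HU]]]] K0 Hv.
have : (v <= Es 0 + Ec 0 + Eu 0)%MS by apply: submx_trans (submx1 _) (Hdec 0).2.
case/sub_addsmxP => u vE.
have : (u.1 *m (Es 0 + Ec 0)%MS <= Es 0 + Ec 0)%MS by apply: submxMl.
case/sub_addsmxP => w wE.
set vs := w.1 *m Es 0; set vc := w.2 *m Ec 0; set vu := u.2 *m Eu 0.
have vE' : v = vs + vc + vu by rewrite vE wE.
have svs : (vs <= Es 0)%MS by apply: submxMl.
have svc : (vc <= Ec 0)%MS by apply: submxMl.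
have svu : (vu <= Eu 0)%MS by apply: submxMl.
suff vu0 : vu = 0 by rewrite vE' vu0 addr0; apply: addmx_sub_adds.
have g20 : 0 < g2 by lra.
set A := 2 * K ^+ 2 + 4 * C ^+ 2 * rnorm g x vs ^+ 2 + 4 * C ^+ 2 * rnorm g x vc ^+ 2.
have qu0 : qf (g x) vu <= 0.
  apply: (@geom2 R _ (C ^+ 2 * A) (g2 ^+ 2) (mu ^+ 2)).
  - exact (qf_ge0 _ _ Hg).
  - by rewrite exprn_gt0.
  - by rewrite ltrXn2r //; lra.
  move=> n.
  have hu := HU n 0 vu svu; have hs := HS n 0 vs svs; have hc := (HC n 0 vc svc).2.
  rewrite ho in hu hs hc.
  set D := Dfn f Df x n in hu hs hc Hv *; set y := iter n f x in hu hs hc Hv *.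
  have Cne : C != 0 by apply/eqP; lra.
  have hq := @arith R C C^-1 (mu ^+ n) (g2 ^+ n) (nu ^+ n) K
    (rnorm g x vu) (rnorm g x vs) (rnorm g x vc)
    (qf (g y) (v *m D)) (qf (g y) (vs *m D)) (qf (g y) (vc *m D)) (qf (g y) (vu *m D))
    C1 (mulVf Cne).
  rewrite -!exprM !(mulnC 2%N) !exprM.
  have su2 : rnorm g x vu ^+ 2 = qf (g x) vu by rewrite sqr_sqrtr // (qf_ge0 _ _ Hg).
  rewrite -su2 [X in X <= _]mulrC [X in _ <= X]mulrC.
  rewrite /A; apply hq.
  - by rewrite exprn_ge0 // ltW.
  - by apply: lerXn2r; rewrite ?nnegrE; lra.
  - exact: sqrtr_ge0.
  - exact: sqrtr_ge0.
  - have -> : vu *m D = v *m D + - (vs *m D + vc *m D).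
      by rewrite vE' !mulmxDl (addrC (vs *m D + vc *m D)) addrK.
    have := qf_para (g y) (v *m D) (- (vs *m D + vc *m D)).
    have := qf_para (g y) (vs *m D) (vc *m D).
    have := qf_ge0 y (v *m D + (vs *m D + vc *m D)) Hg.
    have := qf_ge0 y (vs *m D - vc *m D) Hg.
    rewrite !qfN opprK; lra.
  - have hh : 0 <= C^-1 * mu ^+ n * rnorm g x vu.
      by rewrite !mulr_ge0 ?invr_ge0 ?exprn_ge0 ?sqrtr_ge0 //; lra.
    exact (@sq_ge R _ _ (qf_ge0 _ _ Hg) hh hu).
  - exact (@sq_le R _ _ (qf_ge0 _ _ Hg) (Hv n)).
  - exact (@sq_le R _ _ (qf_ge0 _ _ Hg) hs).
  - exact (@sq_le R _ _ (qf_ge0 _ _ Hg) hc).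
have : qf (g x) vu = 0 by apply/eqP; rewrite eq_le qu0 (qf_ge0 _ _ Hg).
apply: contra_eq => nz; rewrite gt_eqF //; exact ((Hg x).2 _ nz).
Qed.

Theorem mainTheorem8 (R : realType) (M : Type) (d : nat)
    (f : M -> M) (Df : M -> 'M[R]_d) (g : M -> 'M[R]_d)
    (nu g1 g2 mu C : R) :
  ph_endomorphism f Df g nu g1 g2 mu C ->
  forall (x : M) (o1 o2 : int -> M) (Es1 Ec1 Eu1 Es2 Ec2 Eu2 : int -> 'M[R]_d),
    is_orbit f o1 -> o1 0 = x ->
    ph_splitting f Df g nu g1 g2 mu C o1 Es1 Ec1 Eu1 ->
    is_orbit f o2 -> o2 0 = x ->
    ph_splitting f Df g nu g1 g2 mu C o2 Es2 Ec2 Eu2 ->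
    (Ec2 0 <= Ec1 0 + Es1 0)%MS /\ (Ec1 0 + Es1 0 == Ec2 0 + Es2 0)%MS.
Proof.
move=> Hph x o1 o2 Es1 Ec1 Eu1 Es2 Ec2 Eu2 _ h1 H1 _ h2 H2.
have Hph' := Hph.
move: Hph' => [_ [Hg [nu0 [nug1 [g12 [g2mu [nu1 [mu1 [C1 _]]]]]]]]].
have incl : forall o o' Es Ec Eu Es' Ec' Eu', o 0 = x -> o' 0 = x ->
    ph_splitting f Df g nu g1 g2 mu C o Es Ec Eu ->
    ph_splitting f Df g nu g1 g2 mu C o' Es' Ec' Eu' ->
    (Ec 0 <= Es' 0 + Ec' 0)%MS /\ (Es 0 <= Es' 0 + Ec' 0)%MS.
  move=> o o' Es Ec Eu Es' Ec' Eu' ho ho' Hs Hs'.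
  move: (Hs) => [_ [_ [HS [HC _]]]].
  split; apply/row_subP => i.
    apply: (@key R M d f Df g nu g1 g2 mu C x o' Es' Ec' Eu' (row i (Ec 0)) (C * rnorm g x (row i (Ec 0))) Hph ho' Hs' _ _).
      by rewrite mulr_ge0 ?sqrtr_ge0 //; lra.
    move=> n; have := (HC n 0 (row i (Ec 0)) (row_sub _ _)).2; rewrite ho.
    by rewrite mulrAC.
  apply: (@key R M d f Df g nu g1 g2 mu C x o' Es' Ec' Eu' (row i (Es 0)) (C * rnorm g x (row i (Es 0))) Hph ho' Hs' _ _).
    by rewrite mulr_ge0 ?sqrtr_ge0 //; lra.
  move=> n; have := HS n 0 (row i (Es 0)) (row_sub _ _); rewrite ho => h.
  apply: le_trans h _; rewrite mulrAC; apply: ler_wpM2l.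
    by rewrite mulr_ge0 ?sqrtr_ge0 //; lra.
  by apply: lerXn2r; rewrite ?nnegrE; lra.
have [a1 b1] := incl o2 o1 Es2 Ec2 Eu2 Es1 Ec1 Eu1 h2 h1 H2 H1.
have [a2 b2] := incl o1 o2 Es1 Ec1 Eu1 Es2 Ec2 Eu2 h1 h2 H1 H2.
rewrite addsmxC in a1; rewrite addsmxC in b1; rewrite addsmxC in a2; rewrite addsmxC in b2.
split; first exact a1.
by rewrite !addsmx_sub a1 b1 a2 b2.
Qed.
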